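(* Let $\Lambda$ be an antichain lattice in $\mathbb{Z}^n$ and let $A\subseteq\mathbb{Z}^n$ be a generic $\Lambda$-finite set. Then for each $\alpha\in A$, the set of neighbors of $\alpha$ in $A$ is finite.
   Context: Notation: $\ll$ strict componentwise inequality, $\vee$ componentwise maximum; antichain lattice = subgroup of $\mathbb{Z}^n$ whose distinct elements are pairwise incomparable. $T_\eta=\eta-\mathbb{N}^n$, $T^o_\eta=\{\beta:\beta\ll\eta\}$; the $X$-face ($\emptyset\ne X\subseteq[n]$) of $T_\eta$ is $\{\alpha\in T_\eta:\alpha_i=\eta_i\ \forall i\in X\}$. $A$ is generic if whenever $T^o_\eta\cap A=\emptyset$, each face of $T_\eta$ contains at most one point of $A$. $A$ is $\Lambda$-finite if $A=A+\Lambda$ and $A=A_0+\Lambda$ for some finite $A_0$. A neighbor of $\alpha$ in $A$ is an element $\beta\in A$, $\beta\ne\alpha$, such that $\{\alpha,\beta\}$ is neighborly, i.e. $T^o_{\alpha\vee\beta}\cap A=\emptyset$. *)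

(* Defs.v *)
From mathcomp Require Import all_boot all_order all_algebra.
Set Implicit Arguments. Unset Strict Implicit. Unset Printing Implicit Defensive.
Import Order.TTheory GRing.Theory Num.Theory.
Local Open Scope ring_scope.

Definition pt (n : nat) := {ffun 'I_n -> int}.
Definition ptset (n : nat) := pt n -> Prop.

Definition padd n (a b : pt n) : pt n := [ffun i => a i + b i].
Definition psub n (a b : pt n) : pt n := [ffun i => a i - b i].
Definition pzero n : pt n := [ffun _ => 0].
Definition pjoin n (a b : pt n) : pt n := [ffun i => Num.max (a i) (b i)].

Definition ple n (a b : pt n) : Prop := forall i, a i <= b i.
Definition pll n (a b : pt n) : Prop := forall i, a i < b i.

Definition is_subgroup n (L : ptset n) : Prop :=
  L (pzero n) /\ forall x y, L x -> L y -> L (psub x y).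

Definition antichain_lattice n (L : ptset n) : Prop :=
  is_subgroup L /\
  forall x y, L x -> L y -> x <> y -> ~ ple x y /\ ~ ple y x.

Definition psum n (B L : ptset n) : ptset n :=
  fun x => exists a l, B a /\ L l /\ x = padd a l.

Definition set_eq n (B C : ptset n) : Prop := forall x, B x <-> C x.

Definition Lambda_finite n (L A : ptset n) : Prop :=
  set_eq A (psum A L) /\
  exists A0 : seq (pt n), set_eq A (psum (fun a => a \in A0) L).

Definition Tcone n (eta : pt n) : ptset n := fun b => ple b eta.
Definition Topen n (eta : pt n) : ptset n := fun b => pll b eta.

Definition face n (eta : pt n) (X : {set 'I_n}) : ptset n :=
  fun a => Tcone eta a /\ forall i, i \in X -> a i = eta i.

Definition disjoint_sets n (B C : ptset n) : Prop := forall x, B x -> C x -> False.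

Definition generic n (A : ptset n) : Prop :=
  forall eta : pt n, disjoint_sets (Topen eta) A ->
    forall X : {set 'I_n}, X != set0 ->
      forall a b, A a -> A b -> face eta X a -> face eta X b -> a = b.

Definition neighborly n (A : ptset n) (a b : pt n) : Prop :=
  disjoint_sets (Topen (pjoin a b)) A.

Definition neighbor n (A : ptset n) (a b : pt n) : Prop :=
  A b /\ b <> a /\ neighborly A a b.

Definition finite_set n (B : ptset n) : Prop :=
  exists s : seq (pt n), forall x, B x -> x \in s.

(* Main.v *)
Require Import Defs.
From mathcomp Require Import all_boot all_order all_algebra.
From mathcomp Require Import zify.
From Stdlib Require Import Classical.
Set Implicit Arguments. Unset Strict Implicit. Unset Printing Implicit Defensive.
Import Order.TTheory GRing.Theory Num.Theory.
Local Open Scope ring_scope.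

Lemma fin_union n (I : eqType) (l : seq I) (P : I -> ptset n) :
  (forall i, i \in l -> finite_set (P i)) ->
  finite_set (fun x => exists2 i, i \in l & P i x).
Proof.
elim: l => [|j l IH] H.
  by exists [::] => x [i].
have [s1 Hs1] := H j (mem_head _ _).
have [s2 Hs2] : finite_set (fun x => exists2 i, i \in l & P i x).
  by apply: IH => i il; apply: H; rewrite inE il orbT.
exists (s1 ++ s2) => x [i]; rewrite inE mem_cat => /orP [/eqP -> Px|il Px].
  by rewrite Hs1.
by rewrite (Hs2 x) ?orbT //; exists i.
Qed.

Lemma decomp n (alpha : pt n) (f : pt n -> pt n) (K : {set 'I_n}) (S : ptset n)
  x0 y :
  (forall y, S y -> ple alpha (f y)) ->
  (forall y y', S y -> S y' -> ple (f y) (f y') -> y = y') ->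
  (forall y y' i, S y -> S y' -> i \in K -> f y i = f y' i) ->
  S x0 -> S y ->
  y = x0 \/ exists2 i, i \in ~: K &
     exists2 m, m \in iota 0 `|f x0 i - alpha i|%N & f y i = alpha i + m%:Z.
Proof.
move=> Hb Ha Hk Sx0 Sy.
case: (classic (y = x0)) => [->|ne]; [by left|right].
have [i Hi] : exists i, ~ (f x0 i <= f y i).
  apply: not_all_ex_not => H; apply: ne; symmetry; exact: Ha.
have lt : f y i < f x0 i by rewrite ltNge; apply/negP.
exists i.
  rewrite inE; apply/negP => iK; move: lt; rewrite (Hk _ _ _ Sy Sx0 iK).
  by rewrite ltxx.
have le := Hb _ Sy i.
exists `|f y i - alpha i|%N.
  rewrite mem_iota add0n /=. lia.
lia.
Qed.

Lemma dickson n (alpha : pt n) (f : pt n -> pt n) : forall k (K : {set 'I_n}) (S : ptset n),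
  (#|~: K| <= k)%N ->
  (forall y, S y -> ple alpha (f y)) ->
  (forall y y', S y -> S y' -> ple (f y) (f y') -> y = y') ->
  (forall y y' i, S y -> S y' -> i \in K -> f y i = f y' i) ->
  finite_set S.
Proof.
elim=> [|k IH] K S Hc Hb Ha Hk.
  case: (classic (exists x0, S x0)) => [[x0 Sx0]|none]; last first.
    by exists [::] => x Sx; case: none; exists x.
  exists [:: x0] => y Sy.
  case: (decomp Hb Ha Hk Sx0 Sy) => [->|[i iK _]]; first by rewrite inE.
  have : (0 < #|~: K|)%N by apply/card_gt0P; exists i.
  by rewrite leqn0 in Hc; rewrite (eqP Hc).
case: (classic (exists x0, S x0)) => [[x0 Sx0]|none]; last first.
  by exists [::] => x Sx; case: none; exists x.
pose P i m := fun y => S y /\ f y i = alpha i + m%:Z.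
have [s Hs] : finite_set (fun y => exists2 i, i \in enum (~: K) &
     (fun y => exists2 m, m \in iota 0 `|f x0 i - alpha i|%N & P i m y) y).
  apply: fin_union => i; rewrite mem_enum => iK.
  apply: fin_union => m _.
  apply: (IH (i |: K)).
  - have : (#|~: (i |: K)| < #|~: K|)%N.
      apply: proper_card; apply/properP; split.
        by rewrite setCS subsetUr.
      by exists i => //; rewrite !inE eqxx.
    move=> h; rewrite -ltnS; exact: leq_trans h Hc.
  - by move=> y [Sy _]; exact: Hb.
  - by move=> y y' [Sy _] [Sy' _]; exact: Ha.
  - move=> y y' j [Sy e] [Sy' e']; rewrite !inE => /orP [/eqP ->|jK].
      by rewrite e e'.
    exact: Hk.
exists (x0 :: s) => y Sy.
case: (decomp Hb Ha Hk Sx0 Sy) => [->|[i iK [m mi e]]]; first by rewrite inE eqxx.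
rewrite inE (Hs y) ?orbT //; exists i; first by rewrite mem_enum.
by exists m.
Qed.

Theorem mainTheorem14 (n : nat) (L A : ptset n) :
  antichain_lattice L -> generic A -> Lambda_finite L A ->
  forall alpha, A alpha -> finite_set (neighbor A alpha).
Proof.
move=> _ Hg _ alpha Aa.
apply: (@dickson n alpha (pjoin alpha) #|~: (set0 : {set 'I_n})| set0) => //.
- move=> y _ i; rewrite /pjoin ffunE; lia.
- move=> b b' [Ab [nb Hnb]] [Ab' [nb' Hnb']] Hle.
  apply: NNPP => ne.
  set D := pjoin alpha b'.
  have bD : ple b D by move=> i; have := Hle i; rewrite /D /pjoin !ffunE; lia.
  case: (classic (forall i, b i < D i)) => [H|].
    exact: (Hnb' b H Ab).
  move=> /not_all_ex_not [i Hi].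
  have eq : b i = D i.
    apply/eqP; rewrite eq_le bD /=; rewrite leNgt; apply/negP => h; exact: Hi h.
  have ne0 : [set i] != set0 by apply/set0Pn; exists i; rewrite inE.
  have fb : face D [set i] b by split => // j; rewrite inE => /eqP ->.
  have aD : ple alpha D by move=> j; rewrite /D /pjoin ffunE; lia.
  have b'D : ple b' D by move=> j; rewrite /D /pjoin ffunE; lia.
  have : D i = alpha i \/ D i = b' i by rewrite /D /pjoin ffunE; lia.
  case=> e.
  + have fa : face D [set i] alpha by split => // j; rewrite inE => /eqP ->.
    exact: nb (Hg D Hnb' [set i] ne0 b alpha Ab Aa fb fa).
  + have fa : face D [set i] b' by split => // j; rewrite inE => /eqP ->.
    exact: ne (Hg D Hnb' [set i] ne0 b b' Ab Ab' fb fa).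
- by move=> y y' i _ _; rewrite inE.
Qed.
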